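(* The functor $\vec{\mathrm{Sp}}$ from the category of multipointed $d$-spaces to the category of directed spaces is a left adjoint. Its right adjoint is the functor $\vec{\Omega}$ from directed spaces to multipointed $d$-spaces which takes a directed space $(|Y|,d(Y))$ to the multipointed $d$-space $(|Y|,|Y|,d(Y))$ (all points are states and the execution paths are the directed paths), and acts as the identity on underlying continuous maps.
   Context: Let $\mathbf{Top}$ be the category of $\Delta$-generated spaces (or of $\Delta$-Hausdorff $\Delta$-generated spaces). For $\ell>0$ let $\mu_\ell(t)=t/\ell$, $\mu_\ell:[0,\ell]\to[0,1]$. $\mathcal{M}(\ell,\ell')$ is the set of non-decreasing surjective continuous maps $[0,\ell]\to[0,\ell']$; $\mathcal{I}(\ell)$ is the set of non-decreasing continuous maps $[0,1]\to[0,\ell]$ (constant maps allowed). The Moore composition of paths $\gamma_1:[0,\ell_1]\to U$, $\gamma_2:[0,\ell_2]\to U$ with $\gamma_1(\ell_1)=\gamma_2(0)$ is $\gamma_1*\gamma_2:[0,\ell_1+\ell_2]\to U$, equal to $\gamma_1(t)$ on $[0,\ell_1]$ and $\gamma_2(t-\ell_1)$ on $[\ell_1,\ell_1+\ell_2]$. The normalized composition of $\gamma_1,\gamma_2:[0,1]\to U$ is $\gamma_1*_N\gamma_2=(\gamma_1\mu_{1/2})*(\gamma_2\mu_{1/2})$. A multipointed $d$-space is a triple $X=(|X|,X^0,\mathbb{P}^{\mathrm{top}}X)$: a space $|X|$, a subset $X^0\subset|X|$ of states, and a set $\mathbb{P}^{\mathrm{top}}X$ of continuous maps $[0,1]\to|X|$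 (execution paths) with endpoints in $X^0$, closed under precomposition by elements of $\mathcal{M}(1,1)$ and under normalized composition. Maps are continuous maps preserving states and execution paths. A directed space is a pair $Y=(|Y|,d(Y))$ with $d(Y)$ a set of continuous maps $[0,1]\to|Y|$ containing the constant paths, closed under normalized composition and under precomposition by elements of $\mathcal{I}(1)$; morphisms are continuous maps preserving directed paths. For a multipointed $d$-space $X$, $\vec{\mathrm{Sp}}(X)$ is the directed space $(|X|,d(X))$ where $d(X)$ consists of all constant paths and all Moore compositions $(\gamma_1\phi_1\mu_{\ell_1})*\dots*(\gamma_n\phi_n\mu_{\ell_n})$ with $n\ge1$, $\ell_i>0$, $\sum_i\ell_i=1$, $\gamma_i$ execution paths of $X$ and $\phi_i\in\mathcal{I}(1)$; on maps, $\vec{\mathrm{Sp}}$ is the identity on underlying continuous maps. *)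

(* Defs.v *)
From HB Require Import structures.
From mathcomp Require Import all_boot all_order all_algebra.
From mathcomp Require Import all_classical all_reals.
From mathcomp Require Import topology subtype_topology Rstruct Rstruct_topology.
Set Implicit Arguments. Unset Strict Implicit. Unset Printing Implicit Defensive.
Import Order.TTheory GRing.Theory Num.Theory.
Local Open Scope classical_set_scope.
Local Open Scope ring_scope.

Notation R := Rdefinitions.R.

Definition I01 : topologicalType := set_type ([set x : R | 0 <= x <= 1]).

Lemma clamp_in (x : R) : (Num.min (Num.max x 0) 1) \in ([set x : R | 0 <= x <= 1]).
Proof.
rewrite inE /=; apply/andP; split.
- by rewrite le_min ler01 andbT le_max lexx orbT.
- by rewrite ge_min lexx orbT.
Qed.

Definition clamp (x : R) : I01 := SigSub (clamp_in x).
Definition I0 : I01 := clamp 0.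
Definition I1 : I01 := clamp 1.

Definition tval (t : I01) : R := proj1_sig t.

Definition delta_generated (T : topologicalType) : Prop :=
  forall A : set T, open A <->
    (forall g : I01 -> T, continuous g -> open (g @^-1` A)).

Definition in_M11 (phi : I01 -> I01) : Prop :=
  continuous phi /\
  (forall s t : I01, tval s <= tval t -> tval (phi s) <= tval (phi t)) /\
  (forall u : I01, exists t, phi t = u).

Definition in_I1 (phi : I01 -> I01) : Prop :=
  continuous phi /\
  (forall s t : I01, tval s <= tval t -> tval (phi s) <= tval (phi t)).

Definition ncomp (T : Type) (g1 g2 : I01 -> T) : I01 -> T :=
  fun t => if tval t <= 1 / 2 then g1 (clamp (2 * tval t))
           else g2 (clamp (2 * tval t - 1)).

(* multipointed d-space structure (S = states, P = execution paths) on T *)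
Definition is_mdspace (T : topologicalType) (S : set T) (P : set (I01 -> T)) :=
  (forall g, P g -> continuous g) /\
  (forall g, P g -> S (g I0) /\ S (g I1)) /\
  (forall g phi, P g -> in_M11 phi -> P (g \o phi)) /\
  (forall g1 g2, P g1 -> P g2 -> g1 I1 = g2 I0 -> P (ncomp g1 g2)).

Definition is_dspace (T : topologicalType) (D : set (I01 -> T)) :=
  (forall g, D g -> continuous g) /\
  (forall x : T, D (fun _ => x)) /\
  (forall g1 g2, D g1 -> D g2 -> g1 I1 = g2 I0 -> D (ncomp g1 g2)) /\
  (forall g phi, D g -> in_I1 phi -> D (g \o phi)).

Definition md_morph (T U : topologicalType) (S : set T) (P : set (I01 -> T))
    (S' : set U) (P' : set (I01 -> U)) (f : T -> U) :=
  continuous f /\ (forall x, S x -> S' (f x)) /\ (forall g, P g -> P' (f \o g)).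

Definition d_morph (T U : topologicalType) (D : set (I01 -> T))
    (D' : set (I01 -> U)) (f : T -> U) :=
  continuous f /\ (forall g, D g -> D' (f \o g)).

Definition psum (l : nat -> R) (i : nat) : R := \sum_(j < i) l j.

(* d(X) for the directed space Sp(X): constant paths and Moore compositions
   (g_0 phi_0 mu_{l_0}) * ... * (g_{n-1} phi_{n-1} mu_{l_{n-1}}), n >= 1,
   l_i > 0, sum l_i = 1, g_i execution paths, phi_i in I(1). *)
Definition Sp_paths (T : topologicalType) (P : set (I01 -> T)) : set (I01 -> T) :=
  fun d =>
    (exists x : T, d = fun _ => x) \/
    exists (n : nat) (l : nat -> R) (g : nat -> I01 -> T) (phi : nat -> I01 -> I01),
      (0 < n)%N /\
      (forall i, (i < n)%N -> 0 < l i) /\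
      psum l n = 1 /\
      (forall i, (i < n)%N -> P (g i)) /\
      (forall i, (i < n)%N -> in_I1 (phi i)) /\
      (forall i, (i.+1 < n)%N -> g i (phi i I1) = g i.+1 (phi i.+1 I0)) /\
      (forall i (t : I01), (i < n)%N -> psum l i <= tval t <= psum l i.+1 ->
         d t = g i (phi i (clamp ((tval t - psum l i) / l i)))).

(* Main.v *)
Require Import Defs.
From HB Require Import structures.
From mathcomp Require Import all_boot all_order all_algebra.
From mathcomp Require Import all_classical all_reals.
From mathcomp Require Import topology subtype_topology Rstruct Rstruct_topology.
From mathcomp Require Import normedtype.
From mathcomp Require Import ring lra.
Set Implicit Arguments. Unset Strict Implicit. Unset Printing Implicit Defensive.
Import Order.TTheory GRing.Theory Num.Theory.
Local Open Scope classical_set_scope.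
Local Open Scope ring_scope.
Notation tval := Defs.tval.

Lemma tval_cont : continuous tval.
Proof. exact: (@initial_continuous _ _ set_val). Qed.

Lemma cont_into (X : topologicalType) (f : X -> I01) :
  continuous (tval \o f) -> continuous f.
Proof. exact: (@continuous_comp_initial _ _ _ set_val). Qed.

Lemma tval01 (t : I01) : 0 <= tval t <= 1.
Proof. by case: t => x /= /set_mem. Qed.
Lemma tval_ge0 (t : I01) : 0 <= tval t.
Proof. by case/andP: (tval01 t). Qed.
Lemma tval_le1 (t : I01) : tval t <= 1.
Proof. by case/andP: (tval01 t). Qed.

Lemma tval_clampE (x : R) : tval (clamp x) = Num.min (Num.max x 0) 1.
Proof. by []. Qed.

Lemma tval_clamp (x : R) : 0 <= x <= 1 -> tval (clamp x) = x.
Proof.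
case/andP=> h0 h1; rewrite tval_clampE.
by rewrite (max_l h0) (min_l h1).
Qed.

Lemma tval_inj (s t : I01) : tval s = tval t -> s = t.
Proof. by move=> h; apply: eq_sig_hprop. Qed.

Lemma clampK (t : I01) : clamp (tval t) = t.
Proof. by apply: tval_inj; rewrite tval_clamp // tval01. Qed.

Lemma tval_I0 : tval I0 = 0.
Proof. by rewrite tval_clamp // lexx ler01. Qed.
Lemma tval_I1 : tval I1 = 1.
Proof. by rewrite tval_clamp // lexx ler01. Qed.

Lemma clamp_mono (x y : R) : x <= y -> tval (clamp x) <= tval (clamp y).
Proof.
move=> h; rewrite !tval_clampE.
by apply: le_min2 => //; apply: le_max2.
Qed.

Lemma clamp_cont : continuous clamp.
Proof.
apply: cont_into => x /=.
have -> : (tval \o clamp) = (fun x => Num.min (Num.max x 0) 1) by [].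
apply: (@continuous_min _ _ (fun x : R => Num.max x 0) (fun _ => 1)).
  apply: (@continuous_max _ _ id (fun _ => 0)) => //; exact: cvg_cst.
exact: cvg_cst.
Qed.

Lemma near_tval_lt (x : I01) (c : R) : tval x < c -> nbhs x (tval @^-1` [set r | r < c]).
Proof.
move=> hx; apply: tval_cont; apply: open_nbhs_nbhs; split => //; exact: open_lt.
Qed.

Lemma near_tval_gt (x : I01) (c : R) : c < tval x -> nbhs x (tval @^-1` [set r | c < r]).
Proof.
move=> hx; apply: tval_cont; apply: open_nbhs_nbhs; split => //; exact: open_gt.
Qed.

Lemma paste (Y : topologicalType) (c : R) (A B : I01 -> Y) :
  continuous A -> continuous B -> (forall t, tval t = c -> A t = B t) ->
  continuous (fun t => if tval t <= c then A t else B t).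
Proof.
move=> cA cB AB x N /=.
case: (ltgtP (tval x) c) => hx.
- move=> hN; have hA := cA x N hN.
  apply: (@filterS2 _ (nbhs x) _ (A @^-1` N) _ _ _ hA (near_tval_lt hx)) => y /= hy1 hy2.
  by rewrite (ltW hy2).
- move=> hN; have hB := cB x N hN.
  apply: (@filterS2 _ (nbhs x) _ (B @^-1` N) _ _ _ hB (near_tval_gt hx)) => y /= hy1 hy2.
  by rewrite leNgt hy2.
- move=> hN; have hA := cA x N hN.
  have hB : nbhs x (B @^-1` N).
    by apply: (cB x); rewrite -(AB x hx).
  apply: (@filterS2 _ (nbhs x) _ (A @^-1` N) _ _ _ hA hB) => y /= hy1 hy2.
  by case: ifP.
Qed.

Section RC.
Context (X : topologicalType).
Lemma contR_mulr (h : X -> R) (a : R) : continuous h -> continuous (fun x => h x * a).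
Proof. move=> ch x; apply: (@continuousM R X h (fun _ => a)); [exact: ch|exact: cst_continuous]. Qed.
Lemma contR_mull (h : X -> R) (a : R) : continuous h -> continuous (fun x => a * h x).
Proof. move=> ch x; apply: (@continuousM R X (fun _ => a) h); [exact: cst_continuous|exact: ch]. Qed.
Lemma contR_addr (h : X -> R) (a : R) : continuous h -> continuous (fun x => h x + a).
Proof. move=> ch x; apply: (@continuousD R R^o X h (fun _ => a)); [exact: ch|exact: cst_continuous]. Qed.
Lemma contR_addl (h : X -> R) (a : R) : continuous h -> continuous (fun x => a + h x).
Proof. move=> ch x; apply: (@continuousD R R^o X (fun _ => a) h); [exact: cst_continuous|exact: ch]. Qed.
Lemma contR_subr (h : X -> R) (a : R) : continuous h -> continuous (fun x => h x - a).
Proof. move=> ch x; apply: (@continuousB R R^o X h (fun _ => a)); [exact: ch|exact: cst_continuous]. Qed.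
End RC.

Lemma ccomp (X Y Z : topologicalType) (f : X -> Y) (g : Y -> Z) :
  continuous f -> continuous g -> continuous (g \o f).
Proof. by move=> cf cg x; apply: continuous_comp; [exact: cf|exact: cg]. Qed.

Definition tcut (T : Type) (c : R) (f1 f2 : I01 -> T) : I01 -> T :=
  fun t => if tval t <= c then f1 (clamp (tval t / c))
           else f2 (clamp ((tval t - c) / (1 - c))).

Lemma clamp_eq (x y : R) : x = y -> clamp x = clamp y.
Proof. by move->. Qed.

Lemma tcut_cont (Y : topologicalType) (c : R) (f1 f2 : I01 -> Y) :
  0 < c < 1 -> continuous f1 -> continuous f2 -> f1 I1 = f2 I0 ->
  continuous (tcut c f1 f2).
Proof.
case/andP=> c0 c1 cf1 cf2 e.
apply: (paste (A := f1 \o (clamp \o (fun t => tval t / c)))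
              (B := f2 \o (clamp \o (fun t => (tval t - c) / (1 - c))))).
- apply: ccomp cf1; apply: ccomp clamp_cont; apply: contR_mulr; exact: tval_cont.
- apply: ccomp cf2; apply: ccomp clamp_cont; apply: contR_mulr; apply: contR_subr; exact: tval_cont.
- move=> t ht /=; rewrite ht subrr mul0r divff ?gt_eqF //.
Qed.

Lemma in_I1_comp (phi psi : I01 -> I01) : in_I1 phi -> in_I1 psi -> in_I1 (phi \o psi).
Proof.
move=> [c1 m1] [c2 m2]; split; first exact: ccomp.
by move=> s t h /=; apply: m1; apply: m2.
Qed.

Lemma in_I1_id : in_I1 id.
Proof. by split => // x; apply: cvg_id. Qed.

Lemma in_I1_cst (u : I01) : in_I1 (fun _ => u).
Proof. by split => //; exact: cst_continuous. Qed.

Lemma in_I1_aff (a b e f : R) (psi : I01 -> I01) : 0 <= a -> 0 <= b -> in_I1 psi ->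
  in_I1 (fun u => clamp (a * tval (psi (clamp (b * tval u + e))) + f)).
Proof.
move=> a0 b0 [cp mp]; split.
- apply: (ccomp (f := fun u => a * tval (psi (clamp (b * tval u + e))) + f)) clamp_cont.
  apply: contR_addr; apply: contR_mull.
  apply: (ccomp (f := fun u => psi (clamp (b * tval u + e)))) tval_cont.
  apply: (ccomp (f := fun u => clamp (b * tval u + e))) cp.
  apply: (ccomp (f := fun u => b * tval u + e)) clamp_cont.
  by apply: contR_addr; apply: contR_mull; exact: tval_cont.
- move=> s t h; apply: clamp_mono; rewrite lerD2r; apply: ler_wpM2l => //.
  by apply: mp; apply: clamp_mono; rewrite lerD2r; apply: ler_wpM2l.
Qed.

Inductive Chain (T : Type) (P : set (I01 -> T)) : (I01 -> T) -> Prop :=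
| ch1 g phi : P g -> in_I1 phi -> Chain P (g \o phi)
| ch2 g phi d2 c : P g -> in_I1 phi -> Chain P d2 -> 0 < c < 1 ->
    g (phi I1) = d2 I0 -> Chain P (tcut c (g \o phi) d2).

Lemma chain_cont (T : topologicalType) (P : set (I01 -> T)) d :
  (forall g, P g -> continuous g) -> Chain P d -> continuous d.
Proof.
move=> hP; elim => {d} [g phi Pg [cphi _]|g phi d2 c Pg [cphi _] _ IH c01 e].
  by apply: ccomp cphi (hP _ Pg).
apply: tcut_cont => //; first by apply: ccomp cphi (hP _ Pg).
Qed.

Lemma in01_div (x y : R) : 0 <= x -> x <= y -> 0 < y -> 0 <= x / y <= 1.
Proof.
move=> x0 xy y0; apply/andP; split; first by rewrite divr_ge0 // ltW.
by rewrite ler_pdivrMr // mul1r.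
Qed.

Lemma tcut_assoc (T : Type) (c c' : R) (A B C : I01 -> T) :
  0 < c < 1 -> 0 < c' < 1 ->
  tcut c (tcut c' A B) C =
  tcut (c * c') A (tcut ((c - c * c') / (1 - c * c')) B C).
Proof.
case/andP=> c0 c1 /andP[c'0 c'1].
have cc0 : 0 < c * c' by rewrite mulr_gt0.
have cc1 : c * c' < c by rewrite gtr_pMr.
have cc1' : 0 < 1 - c * c' by lra.
have c''0 : 0 < c - c * c' by lra.
apply: funext => t; rewrite /tcut.
have /andP[t0 t1] := tval01 t.
case: (lerP (tval t) (c * c')) => h1.
- rewrite ifT; last by lra.
  rewrite tval_clamp; last by apply: in01_div => //; lra.
  rewrite ifT; last by rewrite ler_pdivrMr // mulrC.
  congr (A (clamp _)); field; rewrite ?gt_eqF //.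
case: (lerP (tval t) c) => h2.
- rewrite tval_clamp; last by apply: in01_div => //; lra.
  rewrite ifF; last by apply/negbTE; rewrite -ltNge ltr_pdivlMr // mulrC.
  rewrite tval_clamp; last by apply: in01_div => //; lra.
  rewrite ifT; last by rewrite ler_pM2r ?invr_gt0 //; lra.
  congr (B (clamp _)); field.
  by rewrite ?gt_eqF //; lra.
- rewrite tval_clamp; last by apply: in01_div => //; lra.
  rewrite ifF; last by apply/negbTE; rewrite -ltNge ltr_pM2r ?invr_gt0 //; lra.
  congr (C (clamp _)); field.
  by rewrite gt_eqF //= subr_eq0; apply/negP => /eqP; lra.
Qed.

Lemma tcut_I0 (T : Type) (c : R) (f1 f2 : I01 -> T) : 0 < c -> tcut c f1 f2 I0 = f1 I0.
Proof. by move=> c0; rewrite /tcut tval_I0 ltW // mul0r. Qed.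

Lemma tcut_I1 (T : Type) (c : R) (f1 f2 : I01 -> T) : c < 1 -> tcut c f1 f2 I1 = f2 I1.
Proof.
move=> c1; rewrite /tcut tval_I1 leNgt c1 /= divff ?gt_eqF //.
by rewrite subr_gt0.
Qed.

Lemma chain_tcut (T : Type) (P : set (I01 -> T)) d1 d2 c :
  Chain P d1 -> Chain P d2 -> d1 I1 = d2 I0 -> 0 < c < 1 -> Chain P (tcut c d1 d2).
Proof.
move=> h; elim: h c d2 => {d1} [g phi Pg Iphi|g phi d1 c' Pg Iphi _ IH c'01 e] c d2 hd2 e12 c01.
  exact: ch2.
move: (c01) (c'01) => /andP[c0 c1] /andP[c'0 c'1].
rewrite tcut_assoc //.
have cc0 : 0 < c * c' by rewrite mulr_gt0.
have cc1 : c * c' < c by rewrite gtr_pMr.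
have cc1' : 0 < 1 - c * c' by lra.
have c''0 : 0 < c - c * c' by lra.
have c''01 : 0 < (c - c * c') / (1 - c * c') < 1.
  by rewrite divr_gt0 //= ltr_pdivrMr // mul1r; lra.
apply: ch2 => //.
- apply: IH => //; by rewrite -e12 tcut_I1.
- apply/andP; split => //; lra.
- by rewrite tcut_I0 //; case/andP: c''01.
Qed.

Lemma tcut_le (T : Type) (c : R) (f1 f2 : I01 -> T) x :
  0 < c -> tval x <= c -> tcut c f1 f2 x = f1 (clamp (c^-1 * tval x + 0)).
Proof. by move=> c0 h; rewrite /tcut h addr0 mulrC. Qed.

Lemma tcut_ge (T : Type) (c : R) (f1 f2 : I01 -> T) x :
  0 < c < 1 -> f1 I1 = f2 I0 -> c <= tval x ->
  tcut c f1 f2 x = f2 (clamp ((1 - c)^-1 * tval x + (- c / (1 - c)))).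
Proof.
case/andP=> c0 c1 e h; rewrite /tcut.
have c1' : 1 - c != 0 by rewrite subr_eq0; apply/negP => /eqP; lra.
case: (lerP (tval x) c) => hx'.
- have hx : tval x = c by lra.
  rewrite hx divff ?gt_eqF // e; congr (f2 _); apply: tval_inj.
  have -> : (1 - c)^-1 * c + - c / (1 - c) = 0 by field.
  by rewrite tval_I0.
- by congr f2; apply: clamp_eq; field.
Qed.

Lemma chain_I1 (T : Type) (P : set (I01 -> T)) d psi :
  Chain P d -> in_I1 psi -> Chain P (d \o psi).
Proof.
move=> h; elim: h psi => {d} [g phi Pg Iphi|g phi d2 c Pg Iphi _ IH c01 e] psi Ipsi.
  exact: (ch1 Pg (in_I1_comp Iphi Ipsi)).
have [cpsi mpsi] := Ipsi.
move: (c01) => /andP[c0 c1].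
have c1' : 0 < 1 - c by lra.
have mono : forall u v : I01, tval u <= tval v -> tval (psi u) <= tval (psi v) by [].
case: (lerP (tval (psi I1)) c) => hb.
  set psi1 := fun u => clamp (c^-1 * tval (psi (clamp (1 * tval u + 0)))  + 0).
  have -> : tcut c (g \o phi) d2 \o psi = g \o (phi \o psi1).
    apply: funext => u /=; rewrite tcut_le //; last first.
      by apply: le_trans hb; apply: mono; rewrite tval_I1 tval_le1.
    by rewrite /psi1 mul1r !addr0 clampK.
  apply: ch1 => //; apply: in_I1_comp Iphi _; apply: in_I1_aff => //.
  by rewrite invr_ge0 ltW.
case: (lerP c (tval (psi I0))) => ha.
  set psi2 := fun u => clamp ((1 - c)^-1 * tval (psi (clamp (1 * tval u + 0))) + (- c / (1 - c))).
  have -> : tcut c (g \o phi) d2 \o psi = d2 \o psi2.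
    apply: funext => u /=; rewrite tcut_ge //; last first.
      by apply: le_trans ha _; apply: mono; rewrite tval_I0 tval_ge0.
    by rewrite /psi2 mul1r addr0 clampK.
  apply: IH; apply: in_I1_aff => //.
  by rewrite invr_ge0 ltW.
have [s s01 hs] : exists2 s, s \in `[0, 1] & tval (psi (clamp s)) = c.
  apply: IVT; first exact: ler01.
    apply: continuous_subspaceT.
    apply: (ccomp (f := fun x => psi (clamp x))) tval_cont.
    exact: ccomp clamp_cont cpsi.
  rewrite -/I0 -/I1; apply/andP; split.
    by rewrite ge_min ltW.
  by rewrite le_max (ltW hb) orbT.
move: s01; rewrite in_itv /= => /andP[s0 s1].
have s0' : 0 < s.
  rewrite lt_neqAle s0 andbT; apply/negP => /eqP es.
  by move: hs; rewrite -es -/I0; lra.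
have s1' : s < 1.
  rewrite lt_neqAle s1 andbT; apply/negP => /eqP es.
  by move: hs; rewrite es -/I1; lra.
have s1'' : 0 < 1 - s by lra.
set psi1 := fun u => clamp (c^-1 * tval (psi (clamp (s * tval u + 0))) + 0).
set psi2 := fun u => clamp ((1 - c)^-1 * tval (psi (clamp ((1 - s) * tval u + s))) + (- c / (1 - c))).
have -> : tcut c (g \o phi) d2 \o psi = tcut s (g \o (phi \o psi1)) (d2 \o psi2).
  apply: funext => u /=.
  have /andP[u0 u1] := tval01 u.
  case: (lerP (tval u) s) => hu.
    rewrite [RHS]tcut_le // tcut_le //; last first.
      rewrite -hs; apply: mono; rewrite tval_clamp //; by apply/andP.
    rewrite /psi1 /= -tval_clampE tval_clamp; last by rewrite addr0 mulrC; apply: in01_div.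
    have -> : s * (s^-1 * tval u + 0) + 0 = tval u by field; rewrite gt_eqF.
    by rewrite clampK.
  have -> : tcut s (g \o (phi \o psi1)) (d2 \o psi2) u =
      (d2 \o psi2) (clamp ((tval u - s) / (1 - s))).
    by rewrite /tcut leNgt hu.
  rewrite tcut_ge //; last first.
    rewrite -hs; apply: mono; rewrite tval_clamp; [lra | by apply/andP].
  rewrite /psi2 /= -tval_clampE tval_clamp; last by apply: in01_div; lra.
  have -> : (1 - s) * ((tval u - s) / (1 - s)) + s = tval u by field; rewrite gt_eqF.
  by rewrite clampK.
have p1 : psi1 I1 = I1.
  by rewrite /psi1 tval_I1 mulr1 !addr0 hs mulVf ?gt_eqF.
have p2 : psi2 I0 = I0.
  rewrite /psi2 tval_I0 mulr0 add0r hs; apply: clamp_eq.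
  by field; rewrite gt_eqF.
apply: chain_tcut.
- apply: ch1 => //; apply: in_I1_comp Iphi _; apply: in_I1_aff => //.
  by rewrite invr_ge0 ltW.
- apply: IH; apply: in_I1_aff => //; first by rewrite invr_ge0 ltW.
  exact: ltW.
- by rewrite /= p1 p2 e.
- by apply/andP.
Qed.

Definition hpsi (c : R) : I01 -> I01 :=
  tcut c (fun u => clamp (2^-1 * tval u + 0)) (fun u => clamp (2^-1 * tval u + 2^-1)).

Lemma hpsi_val (c : R) (t : I01) : 0 < c < 1 ->
  tval (hpsi c t) = if tval t <= c then 2^-1 * (tval t / c)
                    else 2^-1 * ((tval t - c) / (1 - c)) + 2^-1.
Proof.
case/andP=> c0 c1; have /andP[t0 t1] := tval01 t.
rewrite /hpsi /tcut; case: lerP => h.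
  rewrite (@tval_clamp (tval t / c)); last by apply: in01_div.
  rewrite addr0 tval_clamp //.
  have /andP[h0 h1] : 0 <= tval t / c <= 1 by apply: in01_div.
  apply/andP; split; lra.
rewrite (@tval_clamp ((tval t - c) / (1 - c))); last by apply: in01_div; lra.
rewrite tval_clamp //.
have /andP[h0 h1] : 0 <= (tval t - c) / (1 - c) <= 1 by apply: in01_div; lra.
apply/andP; split; lra.
Qed.

Lemma hpsi_I1 (c : R) : 0 < c < 1 -> in_I1 (hpsi c).
Proof.
move=> c01; move: (c01) => /andP[c0 c1]; split.
  apply: tcut_cont => //.
  - apply: (ccomp (f := fun u => 2^-1 * tval u + 0)) clamp_cont.
    by apply: contR_addr; apply: contR_mull; exact: tval_cont.
  - apply: (ccomp (f := fun u => 2^-1 * tval u + 2^-1)) clamp_cont.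
    by apply: contR_addr; apply: contR_mull; exact: tval_cont.
  - by apply: clamp_eq; rewrite tval_I1 tval_I0; ring.
move=> s t h; rewrite !hpsi_val //.
have /andP[t0 t1] := tval01 t; have /andP[s0 s1] := tval01 s.
case: (lerP (tval t) c) => ht; case: (lerP (tval s) c) => hs.
- by rewrite ler_pM2l ?invr_gt0 // ler_pM2r ?invr_gt0.
- lra.
- have /andP[h0 h1] : 0 <= tval s / c <= 1 by apply: in01_div.
  have /andP[h2 h3] : 0 <= (tval t - c) / (1 - c) <= 1 by apply: in01_div; lra.
  nra.
- rewrite lerD2r ler_pM2l ?invr_gt0 // ler_pM2r ?invr_gt0; lra.
Qed.

Lemma dspace_tcut (U : topologicalType) (D : set (I01 -> U)) A B c :
  is_dspace D -> D A -> D B -> A I1 = B I0 -> 0 < c < 1 -> D (tcut c A B).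
Proof.
move=> [_ [_ [hn hr]]] DA DB e c01.
move: (c01) => /andP[c0 c1].
have -> : tcut c A B = ncomp A B \o hpsi c.
  apply: funext => t; rewrite /= /ncomp hpsi_val // /tcut.
  have /andP[t0 t1] := tval01 t.
  case: lerP => h.
    have /andP[h0 h1] : 0 <= tval t / c <= 1 by apply: in01_div.
    rewrite ifT; last by lra.
    by rewrite mulrA divff ?mul1r // pnatr_eq0.
  have /andP[h0 h1] : 0 <= (tval t - c) / (1 - c) <= 1 by apply: in01_div; lra.
  have h2 : 0 < (tval t - c) / (1 - c) by apply: divr_gt0; lra.
  rewrite ifF; last by apply/negbTE; rewrite -ltNge; lra.
  by rewrite mulrDr mulrA divff ?mul1r ?pnatr_eq0 // addrK.
by apply: hr; [apply: hn | apply: hpsi_I1].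
Qed.

Definition MooreP (T : Type) (P : set (I01 -> T)) (d : I01 -> T) (n : nat) (l : nat -> R)
  (g : nat -> I01 -> T) (phi : nat -> I01 -> I01) : Prop :=
      (0 < n)%N /\
      (forall i, (i < n)%N -> 0 < l i) /\
      psum l n = 1 /\
      (forall i, (i < n)%N -> P (g i)) /\
      (forall i, (i < n)%N -> in_I1 (phi i)) /\
      (forall i, (i.+1 < n)%N -> g i (phi i I1) = g i.+1 (phi i.+1 I0)) /\
      (forall i (t : I01), (i < n)%N -> psum l i <= tval t <= psum l i.+1 ->
         d t = g i (phi i (clamp ((tval t - psum l i) / l i)))).

Lemma Sp_pathsE (T : topologicalType) (P : set (I01 -> T)) d :
  Sp_paths P d <-> (exists x : T, d = fun _ => x) \/
     exists n l g phi, MooreP P d n l g phi.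
Proof. by []. Qed.

Lemma psum0 l : psum l 0 = 0.
Proof. by rewrite /psum big_ord0. Qed.

Lemma psumSr l i : psum l i.+1 = psum l i + l i.
Proof. by rewrite /psum big_ord_recr. Qed.

Lemma psumSl l i : psum l i.+1 = l 0%N + psum (fun j => l j.+1) i.
Proof. by rewrite /psum big_ord_recl. Qed.

Lemma psum_scale a l i : psum (fun j => a * l j) i = a * psum l i.
Proof. by rewrite /psum mulr_sumr. Qed.

Lemma psum_ge0 l k : (forall j, (j < k)%N -> 0 < l j) -> forall i, (i <= k)%N -> 0 <= psum l i.
Proof.
move=> h; elim=> [|i IH] hi; first by rewrite psum0.
rewrite psumSr; apply: addr_ge0; first by apply: IH; apply: ltnW.
exact: ltW (h _ hi).
Qed.

Lemma psum_mono l k : (forall j, (j < k)%N -> 0 < l j) -> forall i, (i < k)%N -> psum l i < psum l i.+1.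
Proof. by move=> h i hi; rewrite psumSr ltrDl h. Qed.

Lemma chain_moore (T : Type) (P : set (I01 -> T)) d :
  Chain P d -> exists n l g phi, MooreP P d n l g phi.
Proof.
elim=> {d} [g phi Pg Iphi|g phi d2 c Pg Iphi _ [n2 [l2 [g2 [phi2 IH]]]] c01 e].
  exists 1%N, (fun _ => 1), (fun _ => g), (fun _ => phi).
  split => //; split => //; split; first by rewrite psumSr psum0 add0r.
  split => //; split => //; split => //.
  case=> // t _ _; by rewrite psum0 subr0 divr1 clampK.
move: (c01) => /andP[c0 c1].
have c1' : 0 < 1 - c by lra.
have [n20 [l2p [l2s [Pg2 [Iphi2 [comp2 seg2]]]]]] := IH.
pose l := fun i => if i is j.+1 then (1 - c) * l2 j else c.
have psl : forall j, psum l j.+1 = c + (1 - c) * psum l2 j.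
  by move=> j; rewrite psumSl psum_scale.
exists n2.+1, l, (fun i => if i is j.+1 then g2 j else g),
  (fun i => if i is j.+1 then phi2 j else phi).
have d2I0 : d2 I0 = g2 0%N (phi2 0%N I0).
  rewrite (seg2 0%N I0) //; last by rewrite tval_I0 psum0 lexx psumSr psum0 add0r ltW // l2p.
  by rewrite tval_I0 psum0 subr0 mul0r.
split => //; split.
  by case=> [|j] hj //=; rewrite mulr_gt0 // l2p.
split; first by rewrite psl l2s mulr1; ring.
split; first by case.
split; first by case.
split; first by case=> [|j] hj /=; [rewrite e d2I0 | apply: comp2].
case=> [|j] t hj /=.
  rewrite psum0 subr0 psl psum0 mulr0 addr0 => /andP[t0 tc].
  by rewrite /tcut tc.
rewrite !psl => /andP[ta tb].
have Lj0 : 0 <= psum l2 j by apply: (psum_ge0 l2p); exact: ltnW.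
have Lj1 : 0 <= psum l2 j.+1 by apply: (psum_ge0 l2p).
have lj : 0 < l2 j by apply: l2p.
have /andP[t0 t1] := tval01 t.
rewrite /tcut; case: lerP => htc.
  have tc : tval t = c.
    have : 0 <= (1 - c) * psum l2 j by rewrite mulr_ge0 // ltW.
    lra.
  have Lj : psum l2 j = 0.
    apply/eqP; rewrite eq_le Lj0 andbT.
    have : (1 - c) * psum l2 j <= 0 by lra.
    by rewrite pmulr_rle0.
  rewrite tc divff ?gt_eqF // [LHS]/= -/I1 e (seg2 j I0) //; last by rewrite tval_I0 Lj lexx.
  by congr (g2 j (phi2 j _)); apply: clamp_eq; rewrite tval_I0 Lj; field; rewrite !gt_eqF.
have hu0 : psum l2 j <= (tval t - c) / (1 - c) by rewrite ler_pdivlMr //; lra.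
have hu1 : (tval t - c) / (1 - c) <= psum l2 j.+1 by rewrite ler_pdivrMr //; lra.
rewrite (seg2 j) //; last by rewrite tval_clamp ?hu0 ?hu1 //; apply: in01_div; lra.
rewrite tval_clamp; last by apply: in01_div; lra.
by congr (g2 j (phi2 j _)); apply: clamp_eq; field; rewrite !gt_eqF.
Qed.

Lemma moore_chain (T : Type) (P : set (I01 -> T)) n :
  forall d l g phi, MooreP P d n l g phi -> Chain P d.
Proof.
elim: n => [|n IHn] d l g phi [n0 [lp [ls [Pg [Iphi [comp seg]]]]]] //.
case: n IHn n0 lp ls Pg Iphi comp seg => [|m] IHn n0 lp ls Pg Iphi comp seg.
  have -> : d = g 0%N \o phi 0%N.
    apply: funext => t /=; rewrite (seg 0%N) //.
      by move: ls; rewrite psumSr psum0 add0r => ->; rewrite subr0 divr1 clampK.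
    by rewrite psum0 ls tval01.
  by apply: ch1; [apply: Pg | apply: Iphi].
set c := l 0%N.
have c0 : 0 < c by apply: lp.
have S0 : 0 < psum (fun j => l j.+1) m.+1.
  rewrite psumSr; apply: ltr_wpDl; last by apply: lp.
  by apply: (psum_ge0 (k := m.+1)) => // j hj; apply: lp.
have psl : forall i, psum l i.+1 = c + psum (fun j => l j.+1) i by move=> i; rewrite psumSl.
have c1 : c < 1 by move: ls; rewrite psl; lra.
have c1' : 0 < 1 - c by lra.
pose d' := fun u : I01 => d (clamp (c + (1 - c) * tval u)).
pose l' := fun i => (1 - c)^-1 * l i.+1.
have pl' : forall i, psum l' i = (1 - c)^-1 * psum (fun j => l j.+1) i.
  by move=> i; rewrite psum_scale.
have Cd' : Chain P d'.
  apply: (IHn d' l' (fun i => g i.+1) (fun i => phi i.+1)).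
  split => //; split.
    by move=> i hi; rewrite mulr_gt0 ?invr_gt0 // lp.
  split.
    rewrite pl'; move: ls; rewrite psl => ls.
    have -> : psum (fun j => l j.+1) m.+1 = 1 - c by lra.
    by rewrite mulVf ?gt_eqF.
  split; first by move=> i hi; apply: Pg.
  split; first by move=> i hi; apply: Iphi.
  split; first by move=> i hi; apply: comp.
  move=> i t hi; rewrite !pl' => /andP[ht0 ht1].
  have /andP[t0 t1] := tval01 t.
  rewrite /d' (seg i.+1) //; last first.
    rewrite tval_clamp; last by apply/andP; split; nra.
    rewrite !psl; apply/andP; split.
      by move: ht0; rewrite ler_pdivrMl //; lra.
    by move: ht1; rewrite ler_pdivlMl //; lra.
  rewrite tval_clamp; last by apply/andP; split; nra.
  have li : 0 < l i.+1 by apply: lp.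
  congr (g i.+1 (phi i.+1 _)); apply: clamp_eq.
  rewrite psl /l'; field; rewrite !gt_eqF //.
have -> : d = tcut c (g 0%N \o phi 0%N) d'.
  apply: funext => t; rewrite /tcut; have /andP[t0 t1] := tval01 t.
  case: lerP => htc.
    rewrite (seg 0%N) //; last by rewrite psum0 psumSr psum0 add0r t0.
    by rewrite psum0 subr0.
  rewrite /d' tval_clamp; last by apply: in01_div; lra.
  have -> : c + (1 - c) * ((tval t - c) / (1 - c)) = tval t by field; rewrite gt_eqF.
  by rewrite clampK.
apply: ch2 => //; first by apply: Pg.
- by apply: Iphi.
- by apply/andP.
have cc : tval (clamp c) = c by rewrite tval_clamp //; apply/andP; split; lra.
rewrite comp // /d' tval_I0 mulr0 addr0 (seg 1%N) //.
  by rewrite cc psl psum0 addr0 subrr mul0r.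
rewrite cc.
by rewrite psl psum0 addr0 lexx psl psumSr psum0 add0r lerDl ltW // lp.
Qed.

Lemma chain_const (T : Type) (P : set (I01 -> T)) d :
  Chain P d -> Chain P (fun _ => d I0) /\ Chain P (fun _ => d I1).
Proof.
elim=> {d} [g phi Pg Iphi|g phi d2 c Pg Iphi _ [IH0 IH1] c01 e].
  by split; [apply: (ch1 Pg (in_I1_cst (phi I0))) | apply: (ch1 Pg (in_I1_cst (phi I1)))].
move: (c01) => /andP[c0 c1].
rewrite tcut_I0 // tcut_I1 //; split => //.
exact: (ch1 Pg (in_I1_cst (phi I0))).
Qed.

Lemma ncomp_tcut (T : Type) (f1 f2 : I01 -> T) : ncomp f1 f2 = tcut (1 / 2) f1 f2.
Proof.
apply: funext => t; rewrite /ncomp /tcut; case: ifP => _.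
  by congr f1; apply: clamp_eq; field.
by congr f2; apply: clamp_eq; field.
Qed.

Lemma sp_of_chain (T : topologicalType) (P : set (I01 -> T)) d :
  Chain P d -> Sp_paths P d.
Proof. by move=> /chain_moore h; right. Qed.

Lemma sp_cases (T : topologicalType) (P : set (I01 -> T)) d :
  Sp_paths P d -> (exists x : T, d = fun _ => x) \/ Chain P d.
Proof.
case=> [h|[n [l [g [phi h]]]]]; first by left.
by right; apply: (moore_chain (n := n) (l := l) (g := g) (phi := phi)).
Qed.

Lemma half01 : 0 < (1 / 2 : R) < 1.
Proof. by apply/andP; split; lra. Qed.

Theorem theorem3p5 :
  (forall (T : topologicalType) (S : set T) (P : set (I01 -> T)),
     delta_generated T -> is_mdspace S P -> is_dspace (Sp_paths P)) /\
  (forall (U : topologicalType) (D : set (I01 -> U)),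
     delta_generated U -> is_dspace D -> is_mdspace setT D) /\
  (forall (T T' : topologicalType) (S : set T) (P : set (I01 -> T))
          (S' : set T') (P' : set (I01 -> T')) (f : T -> T'),
     delta_generated T -> delta_generated T' ->
     is_mdspace S P -> is_mdspace S' P' ->
     md_morph S P S' P' f -> d_morph (Sp_paths P) (Sp_paths P') f) /\
  (forall (U U' : topologicalType) (D : set (I01 -> U)) (D' : set (I01 -> U'))
          (f : U -> U'),
     delta_generated U -> delta_generated U' ->
     is_dspace D -> is_dspace D' ->
     d_morph D D' f -> md_morph setT D setT D' f) /\
  (forall (T U : topologicalType) (S : set T) (P : set (I01 -> T))
          (D : set (I01 -> U)) (f : T -> U),
     delta_generated T -> delta_generated U ->
     is_mdspace S P -> is_dspace D ->
     (d_morph (Sp_paths P) D f <-> md_morph S P setT D f)).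
Proof.
split.
  move=> T S P _ [hc [hs [hm hn]]]; split.
    move=> d /sp_cases [[x ->]|Cd]; first exact: cst_continuous.
    exact: chain_cont hc Cd.
  split; first by move=> x; left; exists x.
  split.
    move=> d1 d2 /sp_cases h1 /sp_cases h2 e; rewrite ncomp_tcut.
    case: h1 => [[x ex]|C1]; case: h2 => [[y ey]|C2].
    - left; exists x; subst d1 d2; move: e => /= <-.
      by apply: funext => t; rewrite /tcut; case: ifP.
    - apply: sp_of_chain; apply: chain_tcut half01 => //.
      have [C0 _] := chain_const C2.
      by have -> : d1 = (fun _ => d2 I0) by rewrite ex -e ex.
    - apply: sp_of_chain; apply: chain_tcut half01 => //.
      have [_ C0] := chain_const C1.
      by have -> : d2 = (fun _ => d1 I1) by rewrite ey e ey.
    - by apply: sp_of_chain; apply: chain_tcut half01.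
  move=> d phi /sp_cases [[x ->]|Cd] Iphi; first by left; exists x.
  by apply: sp_of_chain; apply: chain_I1.
split.
  move=> U D _ [hc [hk [hn hr]]]; rewrite /is_mdspace.
  split; first exact: hc.
  split; first by [].
  split; last exact: hn.
  by move=> g phi Dg [c [m _]]; apply: hr.
split.
  move=> T T' S P S' P' f _ _ _ _ [cf [fs fp]]; split => // d.
  case=> [[x ->]|[n [l [g [phi [n0 [lp [ls [Pg [Ip [comp seg]]]]]]]]]]].
    by left; exists (f x).
  right; exists n, l, (fun i => f \o g i), phi.
  split; first by []. split; first by []. split; first by [].
  split; first by move=> i hi; apply: fp; apply: Pg.
  split; first by [].
  split; first by move=> i hi /=; rewrite comp.
  by move=> i t hi ht /=; rewrite (seg i t).
split.
  by move=> U U' D D' f _ _ _ _ [cf hd].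
move=> T U S P D f _ _ [hc [hs [hm hn]]] [hdc [hk [hdn hr]]]; split.
  move=> [cf hd]; split => //; split => // g Pg.
  apply: hd; apply: sp_of_chain.
  exact: (ch1 Pg in_I1_id).
move=> [cf [_ fp]]; split => // d /sp_cases [[x ->]|Cd]; first exact: hk.
elim: Cd => {d} [g phi Pg Iphi|g phi d2 c Pg Iphi _ IH c01 e].
  exact: hr (fp _ Pg) Iphi.
have -> : f \o tcut c (g \o phi) d2 = tcut c (f \o (g \o phi)) (f \o d2).
  by apply: funext => t; rewrite /= /tcut; case: ifP.
apply: (dspace_tcut (conj hdc (conj hk (conj hdn hr)))) => //.
- exact: hr (fp _ Pg) Iphi.
- by rewrite /= e.
Qed.
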